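(* Let $d\ge 2$ and $0<\delta<\frac{\pi}{2}$. A smooth convex body $D\subset S^d$ is of constant diameter $\delta$ if and only if it is of constant width $\delta$.
   Context: $S^d$ is the unit sphere in $E^{d+1}$; $|ab|$ denotes spherical distance (length of the shorter great-circle arc $ab$). A set containing no pair of antipodes is convex if it contains the arc joining any two of its points; a closed convex set with non-empty interior is a convex body. A hemisphere is the intersection of $S^d$ with a closed half-space of $E^{d+1}$ bounded by a hyperplane through the origin. A hemisphere $H$ supports a convex body $C$ at $p$ if $C\subset H$ and $p\in\mathrm{bd}(H)\cap C$; $p\in\mathrm{bd}(C)$ is a smooth point if exactly one hemisphere supports $C$ at $p$, and $C$ is smooth if all its boundary points are smooth. For different, non-opposite hemispheres $G,H$, the lune $G\cap H$ has thickness equal to the spherical distance between the centers of the $(d-1)$-dimensional hemispheres $\mathrm{bd}(G)\cap H$ and $\mathrm{bd}(H)\cap G$. For a hemisphere $K$ supporting $C$, $\mathrm{width}_K(C)$ is the thickness of a narrowest lune of the form $K\cap K^*$ containing $C$; $C$ is of constant width $w$ if $\mathrm{width}_K(C)=w$ for every supporting hemisphere $K$ of $C$. A convex body $D$ of diameter $\delta$ is of constant diameter $\delta$ if for every $p\in\mathrm{bd}(D)$ there is $p'\in\mathrm{bd}(D)$ with $|pp'|=\delta$. *)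

(* Defs.v *)
From Stdlib Require Import Reals Lra.
Open Scope R_scope.

(* Points of E^{d+1} are functions nat -> R; coordinates 0..d are used, and
   points of S^d are required to vanish beyond index d (canonical representatives). *)
Definition vec := nat -> R.

Definition dot (d : nat) (x y : vec) : R := sum_f_R0 (fun i => x i * y i) d.
Definition dist2 (d : nat) (x y : vec) : R :=
  sum_f_R0 (fun i => (x i - y i) * (x i - y i)) d.
Definition vopp (x : vec) : vec := fun i => - x i.

Definition on_sphere (d : nat) (x : vec) : Prop :=
  (forall i, (d < i)%nat -> x i = 0) /\ dot d x x = 1.

Definition sdist (d : nat) (a b : vec) : R := acos (dot d a b).

Definition set := vec -> Prop.

Definition subset_sphere (d : nat) (C : set) : Prop :=
  forall x, C x -> on_sphere d x.

(* the shorter great-circle arc joining non-antipodal a, b *)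
Definition on_arc (d : nat) (a b p : vec) : Prop :=
  on_sphere d p /\
  exists l m, 0 <= l /\ 0 <= m /\ forall i, p i = l * a i + m * b i.

Definition no_antipodes (d : nat) (C : set) : Prop :=
  forall a b, C a -> C b -> b <> vopp a.

Definition convex (d : nat) (C : set) : Prop :=
  subset_sphere d C /\ no_antipodes d C /\
  forall a b p, C a -> C b -> on_arc d a b p -> C p.

Definition closure_pt (d : nat) (C : set) (x : vec) : Prop :=
  on_sphere d x /\
  forall eps, 0 < eps -> exists y, C y /\ dist2 d x y < eps * eps.

Definition closed (d : nat) (C : set) : Prop :=
  forall x, closure_pt d C x -> C x.

Definition interior_pt (d : nat) (C : set) (x : vec) : Prop :=
  C x /\ exists eps, 0 < eps /\
    forall y, on_sphere d y -> dist2 d x y < eps * eps -> C y.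

Definition boundary_pt (d : nat) (C : set) (x : vec) : Prop :=
  closure_pt d C x /\ ~ interior_pt d C x.

Definition convex_body (d : nat) (C : set) : Prop :=
  convex d C /\ closed d C /\ exists x, interior_pt d C x.

Definition hemi (d : nat) (n : vec) : set :=
  fun x => on_sphere d x /\ 0 <= dot d n x.
Definition hemi_bd (d : nat) (n : vec) : set :=
  fun x => on_sphere d x /\ dot d n x = 0.

Definition supports_at (d : nat) (n : vec) (C : set) (p : vec) : Prop :=
  on_sphere d n /\ (forall x, C x -> hemi d n x) /\ hemi_bd d n p /\ C p.

Definition supporting (d : nat) (n : vec) (C : set) : Prop :=
  exists p, supports_at d n C p.

Definition smooth_point (d : nat) (C : set) (p : vec) : Prop :=
  boundary_pt d C p /\
  exists n, supports_at d n C p /\ forall m, supports_at d m C p -> m = n.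

Definition smooth (d : nat) (C : set) : Prop :=
  forall p, boundary_pt d C p -> smooth_point d C p.

(* c is the center of the (d-1)-dimensional hemisphere bd(G) ∩ H,
   where G, H have centers n, m *)
Definition center_of_bd_cap (d : nat) (n m c : vec) : Prop :=
  hemi_bd d n c /\
  forall x, hemi_bd d n x -> (0 <= dot d m x <-> 0 <= dot d c x).

Definition lune_thickness (d : nat) (n m : vec) (t : R) : Prop :=
  exists c1 c2, center_of_bd_cap d n m c1 /\ center_of_bd_cap d m n c2 /\
    t = sdist d c1 c2.

Definition is_glb (E : R -> Prop) (m : R) : Prop :=
  (forall x, E x -> m <= x) /\ (forall b, (forall x, E x -> b <= x) -> b <= m).

(* width_K(C) = w, K with center n: thickness of a narrowest lune K ∩ K*
   containing C (taken as the infimum of such thicknesses) *)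
Definition width_K (d : nat) (n : vec) (C : set) (w : R) : Prop :=
  is_glb (fun t => exists m, on_sphere d m /\ m <> n /\ m <> vopp n /\
            (forall x, C x -> hemi d n x /\ hemi d m x) /\
            lune_thickness d n m t) w.

Definition constant_width (d : nat) (C : set) (w : R) : Prop :=
  forall n, supporting d n C -> width_K d n C w.

Definition diameter (d : nat) (C : set) (delta : R) : Prop :=
  is_lub (fun t => exists a b, C a /\ C b /\ t = sdist d a b) delta.

Definition constant_diameter (d : nat) (D : set) (delta : R) : Prop :=
  convex_body d D /\ diameter d D delta /\
  forall p, boundary_pt d D p ->
    exists p', boundary_pt d D p' /\ sdist d p p' = delta.

(* Main.v *)
Require Import Defs.
From Stdlib Require Import Reals.
From Stdlib Require Import Lra Lia Psatz FunctionalExtensionality ClassicalEpsilon Classical.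
Open Scope R_scope.

Lemma dot_V3 d f g x y z a1 a2 a3 b1 b2 b3 :
  (forall i, f i = a1*x i + a2*y i + a3*z i) ->
  (forall i, g i = b1*x i + b2*y i + b3*z i) ->
  dot d f g = a1*b1*dot d x x + a2*b2*dot d y y + a3*b3*dot d z z
    + (a1*b2+a2*b1)*dot d x y + (a1*b3+a3*b1)*dot d x z + (a2*b3+a3*b2)*dot d y z.
Proof.
  intros Hf Hg; unfold dot; induction d as [|d IH]; simpl.
  - rewrite Hf, Hg; ring.
  - rewrite IH, Hf, Hg; ring.
Qed.

Lemma dot_comm d x y : dot d x y = dot d y x.
Proof. unfold dot; induction d; simpl; [ring| rewrite IHd; ring]. Qed.

Lemma dot_nonneg d x : 0 <= dot d x x.
Proof. unfold dot; induction d; simpl; nra. Qed.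

Lemma sum0 (f : nat -> R) n : (forall i, 0 <= f i) -> sum_f_R0 f n = 0 ->
  forall i, (i <= n)%nat -> f i = 0.
Proof.
  intros Hp. induction n; simpl; intros H i Hi.
  - assert (i = 0%nat) by lia; subst; auto.
  - assert (0 <= sum_f_R0 f n) by (clear -Hp; induction n; simpl; [apply Hp| specialize (Hp (S n)); lra]).
    specialize (Hp (S n)).
    destruct (Nat.eq_dec i (S n)); [subst; lra|]. apply IHn; [lra|lia].
Qed.

Ltac dexp d f g x y z a1 a2 a3 b1 b2 b3 :=
  rewrite (dot_V3 d f g x y z a1 a2 a3 b1 b2 b3) by (intros; cbv beta; ring).
Ltac dexpH H d f g x y z a1 a2 a3 b1 b2 b3 :=
  rewrite (dot_V3 d f g x y z a1 a2 a3 b1 b2 b3) in H by (intros; cbv beta; ring).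

Lemma sph_bound d x y : on_sphere d x -> on_sphere d y -> -1 <= dot d x y <= 1.
Proof.
  intros [_ Hx] [_ Hy].
  pose proof (dot_nonneg d (fun i => x i - y i)) as H1.
  pose proof (dot_nonneg d (fun i => x i + y i)) as H2.
  dexpH H1 d (fun i => x i - y i) (fun i => x i - y i) x y x 1 (-1) 0 1 (-1) 0.
  dexpH H2 d (fun i => x i + y i) (fun i => x i + y i) x y x 1 1 0 1 1 0.
  lra.
Qed.

Lemma unit_eq d x y : on_sphere d x -> on_sphere d y -> dot d x y = 1 -> x = y.
Proof.
  intros [Zx Hx] [Zy Hy] H.
  assert (E : dot d (fun i => x i - y i) (fun i => x i - y i) = 0).
  { dexp d (fun i => x i - y i) (fun i => x i - y i) x y x 1 (-1) 0 1 (-1) 0.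
    rewrite (dot_comm d y x) in *. lra. }
  unfold dot in E.
  assert (Hp : forall i, 0 <= (fun i => (x i - y i) * (x i - y i)) i) by (intro j; cbv beta; apply Rle_0_sqr).
  pose proof (sum0 _ d Hp E) as H0.
  extensionality i. destruct (Nat.le_gt_cases i d) as [l|l].
  - specialize (H0 i l). cbv beta in H0. nra.
  - rewrite Zx, Zy; auto.
Qed.

Definition zb (d : nat) (x : vec) := forall i, (d < i)%nat -> x i = 0.

Lemma sph_zb d x : on_sphere d x -> zb d x.
Proof. intros [H _]; exact H. Qed.

Lemma zb3 d x y z a b c : zb d x -> zb d y -> zb d z ->
  zb d (fun i => a * x i + b * y i + c * z i).
Proof. intros Hx Hy Hz i Hi; rewrite Hx, Hy, Hz by auto; ring. Qed.

Lemma mk_sph d x : zb d x -> dot d x x = 1 -> on_sphere d x.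
Proof. intros; split; auto. Qed.

Definition cvec d (n m : vec) : vec :=
  fun i => / sqrt (1 - dot d n m * dot d n m) * m i
          + (- dot d n m / sqrt (1 - dot d n m * dot d n m)) * n i + 0 * n i.

Lemma center_eq d n m c1 : on_sphere d n -> on_sphere d m -> -1 < dot d n m < 1 ->
  center_of_bd_cap d n m c1 ->
  c1 = cvec d n m.
Proof.
  intros Hn Hm Hk [[Hc1s Hc1n] Hc].
  pose proof Hn as [Zn Nn]; pose proof Hm as [Zm Nm]; pose proof Hc1s as [Zc Nc].
  set (k := dot d n m) in *.
  assert (HA : 0 < 1 - k * k) by nra.
  set (s := sqrt (1 - k*k)).
  assert (Hs : 0 < s) by (apply sqrt_lt_R0; lra).
  assert (Hss : s * s = 1 - k * k) by (apply sqrt_sqrt; lra).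
  set (r := dot d m c1).
  assert (Hmn : dot d m n = k) by (unfold k; apply dot_comm).
  assert (Hcn : dot d c1 n = 0) by (rewrite dot_comm; auto).
  assert (Hcm : dot d c1 m = r) by (unfold r; apply dot_comm).
  assert (HW0 : 0 <= 1 - k*k - r*r).
  { pose proof (dot_nonneg d (fun i => 1 * m i + (-k) * n i + (-r) * c1 i)) as H.
    dexpH H d (fun i => 1 * m i + (-k) * n i + (-r) * c1 i) (fun i => 1 * m i + (-k) * n i + (-r) * c1 i) m n c1 1 (-k) (-r) 1 (-k) (-r).
    rewrite Nm, Nn, Nc, Hmn, Hc1n in H. fold r in H. nra. }
  assert (HW : 1 - k*k - r*r <= 0).
  { destruct (Rle_or_lt (1 - k*k - r*r) 0) as [h|h]; auto. exfalso.
    set (q := / sqrt (1 - k*k - r*r)).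
    assert (Hq : 0 < q) by (apply Rinv_0_lt_compat, sqrt_lt_R0; lra).
    assert (Hqq : q * q * (1 - k*k - r*r) = 1).
    { unfold q. rewrite <- Rinv_mult, sqrt_sqrt by lra. field. lra. }
    set (xm := fun i => (-q) * m i + (q*k) * n i + (q*r) * c1 i).
    assert (Hxm : hemi_bd d n xm).
    { split; [apply mk_sph; [apply zb3; auto|]|].
      - unfold xm. dexp d (fun i => (-q) * m i + (q*k) * n i + (q*r) * c1 i) (fun i => (-q) * m i + (q*k) * n i + (q*r) * c1 i) m n c1 (-q) (q*k) (q*r) (-q) (q*k) (q*r).
        rewrite Nm, Nn, Nc, Hmn, Hc1n. fold r. nra.
      - unfold xm. dexp d n (fun i => (-q) * m i + (q*k) * n i + (q*r) * c1 i) m n c1 0 1 0 (-q) (q*k) (q*r).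
        rewrite Nm, Nn, Nc, Hmn, Hc1n. fold r. fold k. ring. }
    destruct (Hc xm Hxm) as [_ H2].
    assert (0 <= dot d c1 xm).
    { unfold xm. dexp d c1 (fun i => (-q) * m i + (q*k) * n i + (q*r) * c1 i) m n c1 0 0 1 (-q) (q*k) (q*r).
      rewrite ?Nm, ?Nn, ?Nc, ?Hmn, ?Hc1n. fold r. right; ring. }
    specialize (H2 H).
    revert H2. unfold xm. dexp d m (fun i => (-q) * m i + (q*k) * n i + (q*r) * c1 i) m n c1 1 0 0 (-q) (q*k) (q*r).
    rewrite Nm, Nn, Nc, Hmn, Hc1n. fold r. intro H2. nra. }
  assert (Hr0 : 0 <= r).
  { apply Hc; [split; auto|]. rewrite Nc; lra. }
  assert (Hrs : r = s).
  { unfold s. replace (1 - k*k) with (r*r) by lra. rewrite sqrt_square; auto. }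
  unfold cvec; fold k s.
  apply unit_eq with d; auto.
  - apply mk_sph; [apply zb3; auto|].
    dexp d (fun i => / s * m i + (- k / s) * n i + 0 * n i) (fun i => / s * m i + (- k / s) * n i + 0 * n i) m n c1 (/s) (-k/s) 0 (/s) (-k/s) 0.
    rewrite ?Nm, ?Nn, ?Nc, ?Hmn, ?Hc1n.
    replace (/ s * / s) with (/ (s*s)) by (field; lra).
    replace (- k / s * (- k / s)) with (k*k / (s*s)) by (field; lra).
    replace (/ s * (- k / s) + - k / s * / s) with (-2*k/(s*s)) by (field; lra).
    rewrite Hss. field. lra.
  - dexp d c1 (fun i => / s * m i + (- k / s) * n i + 0 * n i) m n c1 0 0 1 (/s) (-k/s) 0.
    rewrite ?Nm, ?Nn, ?Nc, ?Hmn, ?Hc1n. fold r. rewrite <- Hrs. field. lra.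
Qed.

Lemma k_range d n m : on_sphere d n -> on_sphere d m -> m <> n -> m <> vopp n ->
  -1 < dot d n m < 1.
Proof.
  intros Hn Hm H1 H2. pose proof (sph_bound d n m Hn Hm).
  destruct (Req_dec (dot d n m) 1) as [e|e].
  { exfalso; apply H1; symmetry; apply unit_eq with d; auto. }
  destruct (Req_dec (dot d n m) (-1)) as [e'|e'].
  { exfalso; apply H2.
    assert (Hv : on_sphere d (vopp m)).
    { destruct Hm as [Zm Nm]. split.
      - intros i Hi; unfold vopp; rewrite Zm; auto; ring.
      - unfold vopp. dexp d (fun i => - m i) (fun i => - m i) m m m (-1) 0 0 (-1) 0 0. lra. }
    assert (n = vopp m).
    { apply unit_eq with d; auto. unfold vopp.
      dexp d n (fun i => - m i) n m m 1 0 0 0 (-1) 0. lra. }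
    subst. extensionality i. unfold vopp. ring. }
  lra.
Qed.

Lemma cvec_center d n m : on_sphere d n -> on_sphere d m -> -1 < dot d n m < 1 ->
  center_of_bd_cap d n m (cvec d n m).
Proof.
  intros Hn Hm Hk.
  pose proof Hn as [Zn Nn]; pose proof Hm as [Zm Nm].
  set (k := dot d n m) in *.
  assert (HA : 0 < 1 - k * k) by nra.
  assert (Hs : 0 < sqrt (1 - k*k)) by (apply sqrt_lt_R0; lra).
  assert (Hss : sqrt (1 - k*k) * sqrt (1 - k*k) = 1 - k * k) by (apply sqrt_sqrt; lra).
  set (s := sqrt (1 - k*k)) in *.
  assert (Hmn : dot d m n = k) by (unfold k; apply dot_comm).
  unfold cvec; fold k s.
  split; [split; [apply mk_sph; [apply zb3; auto|]|]|].
  - dexp d (fun i => / s * m i + (- k / s) * n i + 0 * n i) (fun i => / s * m i + (- k / s) * n i + 0 * n i) m n n (/s) (-k/s) 0 (/s) (-k/s) 0.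
    rewrite ?Nm, ?Nn, ?Hmn.
    replace (/ s * / s) with (/ (s*s)) by (field; lra).
    replace (- k / s * (- k / s)) with (k*k / (s*s)) by (field; lra).
    replace (/ s * (- k / s) + - k / s * / s) with (-2*k/(s*s)) by (field; lra).
    rewrite Hss. field. lra.
  - dexp d n (fun i => / s * m i + (- k / s) * n i + 0 * n i) m n n 0 1 0 (/s) (-k/s) 0.
    rewrite ?Nm, ?Nn, ?Hmn. field. lra.
  - intros x [Hx Hnx].
    assert (E : dot d (fun i => / s * m i + (- k / s) * n i + 0 * n i) x = dot d m x / s).
    { dexp d (fun i => / s * m i + (- k / s) * n i + 0 * n i) x m n x (/s) (-k/s) 0 0 0 1.
      rewrite Hnx. field; lra. }
    rewrite E.
    split; intro h.
    + unfold Rdiv; apply Rmult_le_pos; [lra| left; apply Rinv_0_lt_compat; lra].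
    + assert (dot d m x = (dot d m x / s) * s) by (field; lra). nra.
Qed.

Lemma cvec_dot d n m : on_sphere d n -> on_sphere d m -> -1 < dot d n m < 1 ->
  dot d (cvec d n m) (cvec d m n) = - dot d n m.
Proof.
  intros Hn Hm Hk.
  pose proof Hn as [Zn Nn]; pose proof Hm as [Zm Nm].
  unfold cvec. rewrite (dot_comm d m n).
  set (k := dot d n m) in *.
  assert (HA : 0 < 1 - k * k) by nra.
  assert (Hs : 0 < sqrt (1 - k*k)) by (apply sqrt_lt_R0; lra).
  assert (Hss : sqrt (1 - k*k) * sqrt (1 - k*k) = 1 - k * k) by (apply sqrt_sqrt; lra).
  set (s := sqrt (1 - k*k)) in *.
  assert (Hmn : dot d m n = k) by (unfold k; apply dot_comm).
  dexp d (fun i => / s * m i + (- k / s) * n i + 0 * n i) (fun i => / s * n i + (- k / s) * m i + 0 * m i) m n n (/s) (-k/s) 0 (-k/s) (/s) 0.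
  rewrite ?Nm, ?Nn, ?Hmn.
  transitivity ((-2*k + k*k*k + k) / (s*s)); [field; lra|]. rewrite Hss. field. lra.
Qed.

Lemma thick_val d n m t : on_sphere d n -> on_sphere d m -> m <> n -> m <> vopp n ->
  lune_thickness d n m t -> t = acos (- dot d n m).
Proof.
  intros Hn Hm H1 H2 [c1 [c2 [Hc1 [Hc2 Ht]]]].
  pose proof (k_range d n m Hn Hm H1 H2) as Hk.
  assert (Hk' : -1 < dot d m n < 1) by (rewrite dot_comm; auto).
  rewrite (center_eq d n m c1 Hn Hm Hk Hc1) in Ht.
  rewrite (center_eq d m n c2 Hm Hn Hk' Hc2) in Ht.
  rewrite Ht. unfold sdist. rewrite cvec_dot; auto.
Qed.

Lemma thick_ex d n m : on_sphere d n -> on_sphere d m -> -1 < dot d n m < 1 ->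
  lune_thickness d n m (acos (- dot d n m)).
Proof.
  intros Hn Hm Hk.
  assert (Hk' : -1 < dot d m n < 1) by (rewrite dot_comm; auto).
  exists (cvec d n m), (cvec d m n). split; [|split].
  - apply cvec_center; auto.
  - apply cvec_center; auto.
  - unfold sdist. rewrite cvec_dot; auto.
Qed.

Lemma dist2_dot d x y : dist2 d x y = dot d (fun i => 1 * x i + (-1) * y i + 0 * x i) (fun i => 1 * x i + (-1) * y i + 0 * x i).
Proof. unfold dist2, dot. apply sum_eq; intros; ring. Qed.

Lemma dist2_exp d x y : dist2 d x y = dot d x x - 2 * dot d x y + dot d y y.
Proof.
  rewrite dist2_dot. dexp d (fun i => 1 * x i + (-1) * y i + 0 * x i) (fun i => 1 * x i + (-1) * y i + 0 * x i) x y x 1 (-1) 0 1 (-1) 0. ring.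
Qed.

Lemma cap_lemma d x q p c : on_sphere d x -> on_sphere d q -> on_sphere d p ->
  dot d p q = c -> 0 <= c -> c <= dot d x q -> 0 <= dot d x q - c * dot d x p.
Proof.
  intros [_ Nx] [_ Nq] [_ Np] Hpq Hc Ha.
  pose proof (sph_bound d x q) as Hb.
  pose proof (dot_nonneg d (fun i => 1 * x i + (c - dot d x q) * q i + (-1) * p i)) as H.
  dexpH H d (fun i => 1 * x i + (c - dot d x q) * q i + (-1) * p i) (fun i => 1 * x i + (c - dot d x q) * q i + (-1) * p i) x q p 1 (c - dot d x q) (-1) 1 (c - dot d x q) (-1).
  rewrite Nx, Nq, Np in H. rewrite (dot_comm d q p), Hpq in H.
  set (a := dot d x q) in *. set (b := dot d x p) in *.
  assert (b <= 1 - (a - c) * (a - c) / 2) by nra.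
  assert (c*b <= c*(1 - (a-c)*(a-c)/2)) by (apply Rmult_le_compat_l; lra). assert (0 <= c*((a-c)*(a-c))) by (apply Rmult_le_pos; nra). nra.
Qed.

Lemma bessel d m p n : on_sphere d m -> on_sphere d p -> on_sphere d n -> dot d p n = 0 ->
  dot d m p * dot d m p + dot d m n * dot d m n <= 1.
Proof.
  intros [_ Nm] [_ Np] [_ Nn] Hpn.
  pose proof (dot_nonneg d (fun i => 1 * m i + (- dot d m p) * p i + (- dot d m n) * n i)) as H.
  dexpH H d (fun i => 1 * m i + (- dot d m p) * p i + (- dot d m n) * n i) (fun i => 1 * m i + (- dot d m p) * p i + (- dot d m n) * n i) m p n 1 (- dot d m p) (- dot d m n) 1 (- dot d m p) (- dot d m n).
  rewrite Nm, Np, Nn, Hpn in H. nra.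
Qed.

Lemma tilt d p n eps : on_sphere d p -> on_sphere d n -> dot d p n = 0 -> 0 < eps ->
  exists y, on_sphere d y /\ dist2 d p y < eps * eps /\ dot d n y < 0.
Proof.
  intros Hp Hn Hpn He. pose proof Hp as [Zp Np]; pose proof Hn as [Zn Nn].
  set (b := Rmin (1/2) (eps/2)).
  assert (Hb : 0 < b /\ b <= 1/2 /\ b <= eps/2) by (unfold b, Rmin; destruct Rle_dec; lra).
  set (a := sqrt (1 - b*b)).
  assert (Ha : 0 <= a) by apply sqrt_pos.
  assert (Haa : a * a = 1 - b * b) by (apply sqrt_sqrt; nra).
  assert (Ha2 : 1 - b * b <= a) by nra.
  exists (fun i => a * p i + (-b) * n i + 0 * n i). split; [|split].
  - apply mk_sph; [apply zb3; auto|].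
    dexp d (fun i => a * p i + (-b) * n i + 0 * n i) (fun i => a * p i + (-b) * n i + 0 * n i) p n n a (-b) 0 a (-b) 0.
    rewrite Np, Nn, Hpn. nra.
  - rewrite dist2_exp.
    dexp d (fun i => a * p i + (-b) * n i + 0 * n i) (fun i => a * p i + (-b) * n i + 0 * n i) p n n a (-b) 0 a (-b) 0.
    dexp d p (fun i => a * p i + (-b) * n i + 0 * n i) p n n 1 0 0 a (-b) 0.
    rewrite Np, Nn, Hpn. nra.
  - dexp d n (fun i => a * p i + (-b) * n i + 0 * n i) p n n 0 1 0 a (-b) 0.
    rewrite Np, Nn, Hpn. nra.
Qed.

Lemma boundary_of_support d D n p : on_sphere d n -> (forall x, D x -> hemi d n x) ->
  D p -> dot d n p = 0 -> boundary_pt d D p.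
Proof.
  intros Hn HD Hp Hnp.
  assert (Sp : on_sphere d p) by (apply HD; auto).
  split.
  - split; auto. intros eps He. exists p. split; auto.
    rewrite dist2_exp. destruct Sp as [_ Np]. rewrite Np. nra.
  - intros [_ [eps [He Hi]]].
    destruct (tilt d p n eps Sp Hn ltac:(rewrite dot_comm; auto) He) as [y [Sy [Dy Ny]]].
    destruct (HD y (Hi y Sy Dy)) as [_ h]. lra.
Qed.

Lemma acos_le x y : -1 <= x -> x <= y -> y <= 1 -> acos y <= acos x.
Proof.
  intros H1 H2 H3. destruct (Rle_or_lt (acos y) (acos x)) as [h|h]; auto.
  pose proof (acos_bound x); pose proof (acos_bound y).
  pose proof (cos_decreasing_1 (acos x) (acos y) ltac:(lra) ltac:(lra) ltac:(lra) ltac:(lra) h).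
  rewrite !cos_acos in H4 by lra. lra.
Qed.

Lemma acos_ge_inv x y : -1 <= x <= 1 -> -1 <= y <= 1 -> acos x <= acos y -> y <= x.
Proof.
  intros H1 H2 H3. destruct (Rle_or_lt y x) as [h|h]; auto.
  assert (acos y <= acos x) by (apply acos_le; lra).
  assert (acos x = acos y) by lra.
  assert (cos (acos x) = cos (acos y)) by (rewrite H0; auto).
  rewrite !cos_acos in H4 by lra. lra.
Qed.

Record trig (delta c s : R) : Prop := {
  tc0 : 0 < c; tc1 : c < 1; ts0 : 0 < s; tcs : s * s + c * c = 1;
  tacos : acos c = delta; tdl : 0 < delta < PI / 2 }.

Lemma get_trig delta : 0 < delta < PI / 2 -> trig delta (cos delta) (sin delta).
Proof.
  intros H. pose proof PI_RGT_0.
  assert (0 < cos delta) by (apply cos_gt_0; lra).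
  assert (0 < sin delta) by (apply sin_gt_0; lra).
  assert (sin delta * sin delta + cos delta * cos delta = 1).
  { pose proof (sin2_cos2 delta) as E. unfold Rsqr in E. lra. }
  split; auto; try nra.
  apply acos_cos; lra.
Qed.

Lemma body_sph d D x : convex_body d D -> D x -> on_sphere d x.
Proof. intros [[H _] _] Hx; apply H; auto. Qed.

Lemma bd_in d D x : convex_body d D -> boundary_pt d D x -> D x.
Proof. intros [_ [Hc _]] [Hx _]; apply Hc; auto. Qed.

Lemma beta_bound d m p n c s : on_sphere d m -> on_sphere d p -> on_sphere d n ->
  dot d p n = 0 -> 0 < s -> s * s + c * c = 1 -> 0 <= c ->
  0 <= dot d m p -> 0 <= c * dot d m p + s * dot d m n -> -c <= dot d m n.
Proof.
  intros Hm Hp Hn Hpn Hs Hsc Hc Ha Hb.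
  pose proof (bessel d m p n Hm Hp Hn Hpn) as B.
  set (a := dot d m p) in *. set (b := dot d m n) in *.
  destruct (Rle_or_lt 0 b) as [h|h]; [lra|].
  assert (s * (-b) <= c * a) by lra.
  assert (0 <= c * a) by (apply Rmult_le_pos; lra).
  assert (0 <= s * (-b)) by (apply Rmult_le_pos; lra).
  assert (0 <= (c*a - s*(-b)) * (c*a + s*(-b))) by (apply Rmult_le_pos; lra).
  assert (s*s*(b*b) <= c*c*(a*a)) by nra.
  assert (c*c*(a*a) <= c*c*(1 - b*b)) by (apply Rmult_le_compat_l; nra).
  assert (HH : (b*b)*(s*s+c*c) <= c*c) by nra.
  rewrite Hsc in HH.
  nra.
Qed.

Lemma sdist_eq_dot d a b delta c : on_sphere d a -> on_sphere d b -> acos c = delta ->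
  -1 <= c <= 1 -> sdist d a b = delta -> dot d a b = c.
Proof.
  intros Ha Hb Hc Hc1 H. unfold sdist in H.
  pose proof (sph_bound d a b Ha Hb).
  rewrite <- (cos_acos (dot d a b)) by lra. rewrite H, <- Hc, cos_acos; lra.
Qed.

Lemma sdist_le_dot d a b delta c : on_sphere d a -> on_sphere d b -> acos c = delta ->
  -1 <= c <= 1 -> sdist d a b <= delta -> c <= dot d a b.
Proof.
  intros Ha Hb Hc Hc1 H. unfold sdist in H.
  pose proof (sph_bound d a b Ha Hb).
  apply acos_ge_inv; lra.
Qed.

Lemma unit_comb d p q c s : dot d p p = 1 -> dot d q q = 1 -> dot d q p = c -> 0 < s ->
  s * s + c * c = 1 ->
  dot d (fun i => / s * q i + (- c / s) * p i + 0 * p i) (fun i => / s * q i + (- c / s) * p i + 0 * p i) = 1.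
Proof.
  intros Np Nq Hqp Hs Hsc.
  dexp d (fun i => / s * q i + (- c / s) * p i + 0 * p i) (fun i => / s * q i + (- c / s) * p i + 0 * p i) q p p (/s) (-c/s) 0 (/s) (-c/s) 0.
  rewrite Np, Nq, Hqp. transitivity ((1 - c*c) / (s*s)); [field; lra|].
  replace (1 - c*c) with (s*s) by lra. field. lra.
Qed.

Lemma cd_cw d delta D : 0 < delta < PI / 2 -> convex_body d D -> smooth d D ->
  constant_diameter d D delta -> constant_width d D delta.
Proof.
  intros Hdl Hb Hsm [_ [Hdiam Hbd]] n [p0 [Hn [HDn [[Sp0 Hnp0] Dp0]]]].
  pose proof (get_trig delta Hdl) as T. set (c := cos delta) in *. set (s := sin delta) in *.
  destruct T as [c0 c1 s0 cs ac _].
  assert (Bp0 : boundary_pt d D p0) by (apply boundary_of_support with n; auto).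
  destruct (Hbd p0 Bp0) as [p1 [Bp1 Hp01]].
  assert (Dp1 : D p1) by (apply bd_in with d; auto).
  assert (Sp1 : on_sphere d p1) by (apply body_sph with D; auto).
  assert (H01 : dot d p0 p1 = c) by (apply sdist_eq_dot with delta; auto; lra).
  assert (H10 : dot d p1 p0 = c) by (rewrite dot_comm; auto).
  assert (Hcl : forall x y, D x -> D y -> c <= dot d x y).
  { intros x y Dx Dy. apply sdist_le_dot with delta; try (apply body_sph with D; auto); auto; try lra.
    apply (proj1 Hdiam). exists x, y; auto. }
  pose proof Sp0 as [Zp0 Np0]; pose proof Sp1 as [Zp1 Np1].
  set (n' := fun i => / s * p1 i + (- c / s) * p0 i + 0 * p0 i).
  assert (Sn' : on_sphere d n').
  { apply mk_sph; [apply zb3; auto|]. unfold n'.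
    apply unit_comb; auto. }
  assert (Dn' : forall x, D x -> 0 <= dot d n' x).
  { intros x Dx. assert (Sx : on_sphere d x) by (apply body_sph with D; auto).
    pose proof (cap_lemma d x p1 p0 c Sx Sp1 Sp0 H01 ltac:(lra) (Hcl x p1 Dx Dp1)).
    unfold n'. dexp d (fun i => / s * p1 i + (- c / s) * p0 i + 0 * p0 i) x p1 p0 x (/s) (-c/s) 0 0 0 1.
    rewrite (dot_comm d p1 x), (dot_comm d p0 x).
    replace (/ s * 0 * dot d p1 p1 + - c / s * 0 * dot d p0 p0 + 0 * 1 * dot d x x +
      (/ s * 0 + - c / s * 0) * dot d p1 p0 + (/ s * 1 + 0 * 0) * dot d x p1 +
      (- c / s * 1 + 0 * 0) * dot d x p0) with ((dot d x p1 - c * dot d x p0) / s) by (field; lra).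
    unfold Rdiv; apply Rmult_le_pos; [lra| left; apply Rinv_0_lt_compat; lra]. }
  assert (Hn'p0 : dot d n' p0 = 0).
  { unfold n'. dexp d (fun i => / s * p1 i + (- c / s) * p0 i + 0 * p0 i) p0 p1 p0 p0 (/s) (-c/s) 0 0 1 0.
    rewrite Np0, H10. field. lra. }
  assert (E : n = n').
  { destruct (Hsm p0 Bp0) as [_ [n0 [_ U]]].
    rewrite (U n), (U n'); auto.
    - split; auto. split; [intros x Dx; split; [apply body_sph with D; auto| apply Dn'; auto]|].
      split; auto. split; auto.
    - split; auto. split; auto. split; auto. split; auto. }
  subst n.
  split.
  - intros t [m [Sm [Hmn [Hmn' [Hin Ht]]]]].
    rewrite (thick_val d n' m t Sn' Sm Hmn Hmn' Ht).
    assert (Ha : 0 <= dot d m p0) by (destruct (Hin p0 Dp0) as [_ [_ h]]; auto).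
    assert (Hb1 : 0 <= dot d m p1) by (destruct (Hin p1 Dp1) as [_ [_ h]]; auto).
    assert (Hmn1 : dot d m n' = (dot d m p1 - c * dot d m p0) / s).
    { unfold n'. dexp d m (fun i => / s * p1 i + (- c / s) * p0 i + 0 * p0 i) m p1 p0 1 0 0 0 (/s) (-c/s).
      field. lra. }
    assert (Hp0n' : dot d p0 n' = 0) by (rewrite dot_comm; auto).
    assert (-c <= dot d m n').
    { apply (beta_bound d m p0 n' c s Sm Sp0 Sn' Hp0n' s0 cs ltac:(lra) Ha).
      rewrite Hmn1. replace (c * dot d m p0 + s * ((dot d m p1 - c * dot d m p0) / s)) with (dot d m p1) by (field; lra). auto. }
    rewrite (dot_comm d n' m). rewrite <- ac.
    pose proof (sph_bound d m n' Sm Sn').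
    apply acos_le; lra.
  - intros b Hlb. apply Hlb.
    set (m0 := fun i => / s * p0 i + (- c / s) * p1 i + 0 * p1 i).
    assert (Sm0 : on_sphere d m0).
    { apply mk_sph; [apply zb3; auto|]. unfold m0.
      apply unit_comb; auto. }
    assert (Hnm : dot d n' m0 = - c).
    { unfold n', m0.
      dexp d (fun i => / s * p1 i + (- c / s) * p0 i + 0 * p0 i) (fun i => / s * p0 i + (- c / s) * p1 i + 0 * p1 i) p1 p0 p0 (/s) (-c/s) 0 (-c/s) (/s) 0.
      rewrite Np0, Np1, H10. transitivity ((-c) * (1 - c*c) / (s*s)); [field; lra|].
      replace (1 - c*c) with (s*s) by lra. field. lra. }
    exists m0. split; [auto|split; [|split; [|split]]].
    + intro h. assert (dot d n' m0 = 1) by (rewrite h; destruct Sn'; auto). lra.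
    + intro h. assert (dot d n' m0 = -1).
      { rewrite h. unfold vopp. destruct Sn' as [_ N'].
        dexp d n' (fun i => - n' i) n' n' n' 1 0 0 (-1) 0 0. lra. }
      lra.
    + intros x Dx. assert (Sx : on_sphere d x) by (apply body_sph with D; auto).
      split; [split; auto; apply Dn'; auto|split; auto].
      pose proof (cap_lemma d x p0 p1 c Sx Sp0 Sp1 H10 ltac:(lra) (Hcl x p0 Dx Dp0)).
      unfold m0. dexp d (fun i => / s * p0 i + (- c / s) * p1 i + 0 * p1 i) x p0 p1 x (/s) (-c/s) 0 0 0 1.
      rewrite (dot_comm d p0 x), (dot_comm d p1 x).
      replace (/ s * 0 * dot d p0 p0 + - c / s * 0 * dot d p1 p1 + 0 * 1 * dot d x x +
        (/ s * 0 + - c / s * 0) * dot d p0 p1 + (/ s * 1 + 0 * 0) * dot d x p0 +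
        (- c / s * 1 + 0 * 0) * dot d x p1) with ((dot d x p0 - c * dot d x p1) / s) by (field; lra).
      unfold Rdiv; apply Rmult_le_pos; [lra| left; apply Rinv_0_lt_compat; lra].
    + pose proof (thick_ex d n' m0 Sn' Sm0 ltac:(rewrite Hnm; lra)) as H.
      rewrite Hnm, Ropp_involutive, ac in H. exact H.
Qed.

Lemma vopp_sph d x : on_sphere d x -> on_sphere d (vopp x).
Proof.
  intros [Zx Nx]. split.
  - intros i Hi; unfold vopp; rewrite Zx; auto; ring.
  - unfold vopp. dexp d (fun i => - x i) (fun i => - x i) x x x (-1) 0 0 (-1) 0 0. lra.
Qed.

Lemma Q_pos t h : 0 < t < 1 -> -1 < h < 1 -> 0 < (1-t)*(1-t) + 2*t*(1-t)*h + t*t.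
Proof.
  intros Ht Hh.
  assert (EQ : (1-t)*(1-t) + 2*t*(1-t)*h + t*t = 1 - 2*(t*(1-t))*(1-h)) by ring.
  assert (t*(1-t) <= 1/4) by (pose proof (Rle_0_sqr (t - 1/2)) as HH; unfold Rsqr in HH; lra).
  assert (0 <= (1/4 - t*(1-t))*(1-h)) by (apply Rmult_le_pos; lra). nra.
Qed.

Lemma first_order d D a b x : convex d D -> on_sphere d a -> D b -> D x ->
  (forall y, D y -> dot d b a <= dot d y a) ->
  0 <= dot d x a - dot d b a * dot d x b.
Proof.
  intros [Hsub [Hna Harc]] Sa Db Dx Hmin.
  assert (Sb : on_sphere d b) by auto. assert (Sx : on_sphere d x) by auto.
  pose proof Sb as [Zb Nb]; pose proof Sx as [Zx Nx].
  set (k := dot d b a). set (A := dot d x a). set (h := dot d x b).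
  destruct (Rle_or_lt 0 (A - k * h)) as [g|g]; auto. exfalso.
  pose proof (sph_bound d x b Sx Sb) as Hh. fold h in Hh.
  assert (h1 : h < 1).
  { destruct (Req_dec h 1) as [e|e]; [|lra].
    assert (x = b) by (apply unit_eq with d; auto). subst x.
    unfold A, h, k in *. rewrite Nb in g. lra. }
  assert (h2 : -1 < h).
  { destruct (Req_dec h (-1)) as [e|e]; [|lra].
    assert (x = vopp b).
    { apply unit_eq with d; auto. apply vopp_sph; auto. unfold vopp.
      dexp d x (fun i => - b i) x b b 1 0 0 0 (-1) 0. fold h. lra. }
    exfalso; exact (Hna b x Db Dx H). }
  assert (Key : forall t, 0 < t < 1 ->
    k * sqrt ((1-t)*(1-t) + 2*t*(1-t)*h + t*t) <= (1-t)*k + t*A).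
  { intros t Ht.
    set (Q := (1-t)*(1-t) + 2*t*(1-t)*h + t*t).
    assert (HQ : 0 < Q).
    { assert (EQ : Q = 1 - 2*(t*(1-t))*(1-h)) by (unfold Q; ring).
      assert (t*(1-t) <= 1/4) by (pose proof (Rle_0_sqr (t - 1/2)) as HH; unfold Rsqr in HH; lra).
      assert (0 <= (1/4 - t*(1-t))*(1-h)) by (apply Rmult_le_pos; lra). nra. }
    assert (HN : 0 < sqrt Q) by (apply sqrt_lt_R0; auto).
    assert (HNN : sqrt Q * sqrt Q = Q) by (apply sqrt_sqrt; lra).
    set (N := sqrt Q) in *.
    set (y := fun i => ((1-t)/N) * b i + (t/N) * x i + 0 * b i).
    assert (Sy : on_sphere d y).
    { apply mk_sph; [apply zb3; auto|]. unfold y.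
      dexp d (fun i => ((1-t)/N) * b i + (t/N) * x i + 0 * b i) (fun i => ((1-t)/N) * b i + (t/N) * x i + 0 * b i) b x b ((1-t)/N) (t/N) 0 ((1-t)/N) (t/N) 0.
      rewrite Nb, Nx, (dot_comm d b x). fold h.
      transitivity (Q / (N*N)); [unfold Q; field; lra|]. rewrite HNN. field. lra. }
    assert (Dy : D y).
    { apply (Harc b x y Db Dx). split; auto. exists ((1-t)/N), (t/N).
      split; [apply Rmult_le_pos; [lra|left; apply Rinv_0_lt_compat; lra]|].
      split; [apply Rmult_le_pos; [lra|left; apply Rinv_0_lt_compat; lra]|].
      intros i; unfold y; ring. }
    pose proof (Hmin y Dy) as Hy. fold k in Hy.
    revert Hy. unfold y.
    dexp d (fun i => ((1-t)/N) * b i + (t/N) * x i + 0 * b i) a b x a ((1-t)/N) (t/N) 0 0 0 1.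
    fold k A. intro Hy.
    assert (E : (1 - t) / N * 0 * dot d b b + t / N * 0 * dot d x x + 0 * 1 * dot d a a +
      ((1 - t) / N * 0 + t / N * 0) * dot d b x + ((1 - t) / N * 1 + 0 * 0) * k +
      (t / N * 1 + 0 * 0) * A = ((1-t)*k + t*A) / N) by (field; lra).
    rewrite E in Hy.
    apply Rmult_le_reg_r with (/ N); [apply Rinv_0_lt_compat; lra|].
    replace (k * N * / N) with k by (field; lra). exact Hy. }
  destruct (Rle_or_lt k 0) as [k0|k0].
  -
    destruct (Req_dec k 0) as [e|e].
    + pose proof (Key (1/2) ltac:(lra)) as K2. rewrite e in g, K2. lra.
    + assert (kn : k < 0) by lra.
      set (t := Rmin (1/2) ((A - k*h) / (2 * k * (1 - h)))).
      assert (Ht : 0 < t <= 1/2 /\ t <= (A - k*h) / (2 * k * (1 - h))).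
      { assert (0 < (A - k*h) / (2 * k * (1 - h))).
        { replace ((A - k*h) / (2 * k * (1 - h))) with ((-(A - k*h)) / (2 * (-k) * (1 - h))) by (field; lra).
          apply Rdiv_lt_0_compat; [lra|]. assert (0 < (-k)*(1-h)) by nra. lra. }
        unfold t, Rmin; destruct Rle_dec; lra. }
      pose proof (Key t ltac:(lra)) as Kt.
      set (Q := (1-t)*(1-t) + 2*t*(1-t)*h + t*t) in Kt.
      set (M := 1 - t*(1-t)*(1-h)).
      assert (HM : 0 <= M) by (unfold M; nra).
      assert (HMQ : Q <= M * M).
      { assert (M*M - Q = (t*(1-t)*(1-h))*(t*(1-t)*(1-h))) by (unfold M, Q; ring).
        pose proof (Rle_0_sqr (t*(1-t)*(1-h))) as HH; unfold Rsqr in HH. lra. }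
      assert (sqrt Q <= M).
      { apply Rsqr_incr_0_var; [|auto]. unfold Rsqr. rewrite sqrt_sqrt; [lra|].
        left; apply Q_pos; lra. }
      assert (k * M <= (1-t)*k + t*A) by nra.
      assert (Hg2 : A - k*h >= k*t*(1-h)).
      { unfold M in *. assert (t*((A - k*h) - k*t*(1-h)) >= 0) by nra. nra. }
      assert (k*t*(1-h) >= (A - k*h)/2).
      { destruct Ht as [_ Ht2].
        assert (t * (2*k*(1-h)) >= (A - k*h)/(2*k*(1-h)) * (2*k*(1-h))).
        { assert (2*k*(1-h) < 0) by nra. nra. }
        replace ((A - k*h)/(2*k*(1-h)) * (2*k*(1-h))) with (A - k*h) in H1 by (field; lra). lra. }
      lra.
  -
    set (r := (A - k)*(A - k)).
    assert (Hr : 0 <= r) by (pose proof (Rle_0_sqr (A - k)) as HH; unfold Rsqr in HH; unfold r; lra).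
    assert (Hkg : 0 < -(k*(A - k*h))) by (assert (0 < k * (-(A-k*h))) by (apply Rmult_lt_0_compat; lra); lra).
    set (t := Rmin (1/2) (-(k*(A - k*h)) / (r + 1))).
    assert (Ht : 0 < t <= 1/2 /\ t <= -(k*(A - k*h)) / (r + 1)).
    { assert (0 < -(k*(A - k*h)) / (r + 1)).
      { apply Rdiv_lt_0_compat; lra. }
      unfold t, Rmin; destruct Rle_dec; lra. }
    pose proof (Key t ltac:(lra)) as Kt.
    set (Q := (1-t)*(1-t) + 2*t*(1-t)*h + t*t) in Kt.
    assert (HQ : 0 <= Q) by (left; apply Q_pos; lra).
    assert (HNN : sqrt Q * sqrt Q = Q) by (apply sqrt_sqrt; lra).
    assert (0 <= sqrt Q) by apply sqrt_pos.
    assert (HL : 0 <= (1-t)*k + t*A) by nra.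
    assert (Hsq : k*k*Q <= ((1-t)*k + t*A) * ((1-t)*k + t*A)).
    { assert (k * sqrt Q * (k * sqrt Q) <= ((1-t)*k + t*A) * ((1-t)*k + t*A)).
      { apply Rmult_le_compat; try nra. }
      nra. }
    assert (H2 : 0 <= t * (2*k*(A - k*h) + t*r)).
    { unfold Q, r in *. nra. }
    assert (H3 : 0 <= 2*k*(A - k*h) + t*r).
    { destruct Ht as [[Ht0 _] _]. nra. }
    assert (t * r <= -(k*(A - k*h)) * r / (r + 1)).
    { destruct Ht as [_ Ht2]. 
      replace (-(k*(A - k*h)) * r / (r + 1)) with ((-(k*(A - k*h)) / (r + 1)) * r) by (field; lra).
      nra. }
    assert (-(k*(A - k*h)) * r / (r + 1) < -(k*(A - k*h))).
    {  assert (0 < -(k*(A - k*h))) by nra.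
      apply Rmult_lt_reg_r with (r + 1); [lra|].
      replace (-(k*(A - k*h)) * r / (r + 1) * (r + 1)) with (-(k*(A - k*h)) * r) by (field; lra).
      nra. }
    nra.
Qed.

Definition incr (f : nat -> nat) := forall j, (f j < f (S j))%nat.

Lemma incr_ge f : incr f -> forall j, (j <= f j)%nat.
Proof. intros H j; induction j; [lia| specialize (H j); lia]. Qed.

Lemma incr_comp f g : incr f -> incr g -> incr (fun j => f (g j)).
Proof.
  intros Hf Hg j.
  assert (forall a b, (a < b)%nat -> (f a < f b)%nat).
  { intros a b Hab. induction Hab; [apply Hf| specialize (Hf m); lia]. }
  apply H, Hg.
Qed.

Lemma cv_sub w l f : Un_cv w l -> incr f -> Un_cv (fun j => w (f j)) l.
Proof.
  intros H Hf eps He. destruct (H eps He) as [N HN]. exists N. intros n Hn.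
  apply HN. pose proof (incr_ge f Hf n). lia.
Qed.

Lemma extract1 (v : nat -> R) : (forall j, -1 <= v j <= 1) ->
  exists f l, incr f /\ Un_cv (fun j => v (f j)) l.
Proof.
  intros Hb.
  destruct (Bolzano_Weierstrass v (fun c => -1 <= c <= 1) (compact_P3 (-1) 1) Hb) as [l Hl].
  assert (Hch : forall N j : nat, exists p, (N <= p)%nat /\ Rabs (v p - l) < / INR (S j)).
  { intros N j. assert (Hp : 0 < / INR (S j)) by (apply Rinv_0_lt_compat, lt_0_INR; lia).
    destruct (Hl (disc l (mkposreal _ Hp)) N) as [p [Hp1 Hp2]].
    - exists (mkposreal _ Hp). intros y Hy; exact Hy.
    - exists p; split; auto. }
  set (ch := fun N j => proj1_sig (constructive_indefinite_description _ (Hch N j))).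
  assert (Hch1 : forall N j, (N <= ch N j)%nat /\ Rabs (v (ch N j) - l) < / INR (S j)).
  { intros N j. unfold ch. destruct (constructive_indefinite_description _ (Hch N j)); auto. }
  set (f := fix f j := match j with O => ch O O | S j' => ch (S (f j')) (S j') end).
  exists f, l. split.
  - intro j. simpl. destruct (Hch1 (S (f j)) (S j)). lia.
  - intros eps He. destruct (archimed_cor1 eps He) as [N [HN1 HN2]].
    exists N. intros n Hn. unfold R_dist.
    assert (Hf : Rabs (v (f n) - l) < / INR (S n)).
    { destruct n; simpl; [apply (Hch1 0%nat 0%nat)| apply (Hch1 _ (S n))]. }
    eapply Rlt_trans; [apply Hf|].
    eapply Rle_lt_trans; [|apply HN1].
    apply Rinv_le_contravar; [apply lt_0_INR; lia| apply le_INR; lia].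
Qed.

Lemma extract (u : nat -> vec) : (forall j i, -1 <= u j i <= 1) ->
  forall N, exists f l, incr f /\ forall i, (i <= N)%nat -> Un_cv (fun j => u (f j) i) (l i).
Proof.
  intros Hb N. induction N as [|N IH].
  - destruct (extract1 (fun j => u j 0%nat) (fun j => Hb j 0%nat)) as [f [l [Hf Hl]]].
    exists f, (fun _ => l). split; auto. intros i Hi. assert (i = 0%nat) by lia. subst; auto.
  - destruct IH as [f [l [Hf Hl]]].
    destruct (extract1 (fun j => u (f j) (S N)) (fun j => Hb (f j) (S N))) as [g [l' [Hg Hl']]].
    exists (fun j => f (g j)), (fun i => if Nat.eqb i (S N) then l' else l i). split.
    + apply incr_comp; auto.
    + intros i Hi. destruct (Nat.eqb_spec i (S N)) as [e|e].
      * subst. exact Hl'.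
      * apply (cv_sub (fun j => u (f j) i) (l i) g); auto. apply Hl. lia.
Qed.

Lemma cv_sum (F : nat -> nat -> R) (G : nat -> R) N :
  (forall i, (i <= N)%nat -> Un_cv (fun j => F j i) (G i)) ->
  Un_cv (fun j => sum_f_R0 (F j) N) (sum_f_R0 G N).
Proof.
  induction N as [|N IH]; intros H; simpl.
  - apply H; lia.
  - apply CV_plus; [apply IH; intros; apply H; lia| apply H; lia].
Qed.

Lemma term_le_sum (f : nat -> R) N i : (forall k, 0 <= f k) -> (i <= N)%nat -> f i <= sum_f_R0 f N.
Proof.
  intros Hp Hi. induction N as [|N IH]; simpl.
  - assert (i = 0%nat) by lia; subst; lra.
  - destruct (Nat.eq_dec i (S N)) as [e|e].
    + subst. assert (0 <= sum_f_R0 f N) by (clear -Hp; induction N; simpl; [apply Hp| specialize (Hp (S N)); lra]). lra.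
    + specialize (IH ltac:(lia)). specialize (Hp (S N)). lra.
Qed.

Lemma coord_bound d x i : on_sphere d x -> -1 <= x i <= 1.
Proof.
  intros [Zx Nx]. destruct (Nat.le_gt_cases i d) as [l|l].
  - assert (x i * x i <= 1).
    { rewrite <- Nx. unfold dot. apply (term_le_sum (fun k => x k * x k)); auto. intros; nra. }
    nra.
  - rewrite Zx; auto; lra.
Qed.

Lemma cv_const_eq (w : nat -> R) c l : (forall j, w j = c) -> Un_cv w l -> l = c.
Proof.
  intros Hw Hl. apply UL_sequence with w; auto.
  intros eps He; exists 0%nat; intros; rewrite Hw; unfold R_dist; rewrite Rminus_diag, Rabs_R0; auto.
Qed.

Lemma sum_zero (y : vec) n : sum_f_R0 (fun i => (y i - y i) * (y i - y i)) n = 0.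
Proof. induction n; simpl; [ring| rewrite IHn; ring]. Qed.

Lemma argmin d D a : closed d D -> subset_sphere d D -> (exists x, D x) -> on_sphere d a ->
  exists b, D b /\ forall x, D x -> dot d b a <= dot d x a.
Proof.
  intros Hcl Hsub [x0 Dx0] Sa.
  set (E := fun r => exists x, D x /\ r = - dot d x a).
  assert (HE : bound E).
  { exists 1. intros r [x [Dx ->]]. pose proof (sph_bound d x a (Hsub x Dx) Sa). lra. }
  destruct (completeness E HE (ex_intro _ _ (ex_intro _ x0 (conj Dx0 eq_refl)))) as [m [Hm1 Hm2]].
  set (k := - m).
  assert (Hk1 : forall x, D x -> k <= dot d x a).
  { intros x Dx. assert (E (- dot d x a)) by (exists x; auto). specialize (Hm1 _ H). unfold k; lra. }
  assert (Hk2 : forall j : nat, exists x, D x /\ dot d x a < k + / INR (S j)).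
  { intros j. assert (Hp : 0 < / INR (S j)) by (apply Rinv_0_lt_compat, lt_0_INR; lia).
    destruct (classic (exists x, D x /\ dot d x a < k + / INR (S j))) as [hh|Hn]; [exact hh|].
    assert (is_upper_bound E (m - / INR (S j))).
    { intros r [x [Dx ->]]. destruct (Rle_or_lt (- dot d x a) (m - / INR (S j))) as [h|h]; auto.
      exfalso. apply Hn. exists x. split; auto. unfold k. lra. }
    specialize (Hm2 _ H). lra. }
  set (u := fun j => proj1_sig (constructive_indefinite_description _ (Hk2 j))).
  assert (Hu : forall j, D (u j) /\ dot d (u j) a < k + / INR (S j)).
  { intros j; unfold u; destruct (constructive_indefinite_description _ (Hk2 j)); auto. }
  assert (Hub : forall j i, -1 <= u j i <= 1).
  { intros j i. apply coord_bound with d. apply Hsub, Hu. }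
  destruct (extract u Hub d) as [f [l [Hf Hl]]].
  set (b := fun i => if Nat.leb i d then l i else 0).
  assert (Hb : forall i, (i <= d)%nat -> Un_cv (fun j => u (f j) i) (b i)).
  { intros i Hi. unfold b. rewrite (proj2 (Nat.leb_le i d) Hi). apply Hl; auto. }
  assert (Zb : zb d b).
  { intros i Hi. unfold b. rewrite (proj2 (Nat.leb_gt i d) Hi). auto. }
  assert (Cdot : forall w, Un_cv (fun j => dot d (u (f j)) w) (dot d b w)).
  { intros w. unfold dot. apply (cv_sum (fun j i => u (f j) i * w i) (fun i => b i * w i)).
    intros i Hi. apply CV_mult; [apply Hb; auto|]. intros eps He; exists 0%nat; intros.
    unfold R_dist; rewrite Rminus_diag, Rabs_R0; auto. }
  assert (Cdd : Un_cv (fun j => dot d (u (f j)) (u (f j))) (dot d b b)).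
  { unfold dot. apply (cv_sum (fun j i => u (f j) i * u (f j) i) (fun i => b i * b i)).
    intros i Hi. apply CV_mult; apply Hb; auto. }
  assert (Sb : on_sphere d b).
  { split; auto. apply (cv_const_eq _ 1 _ (fun j => proj2 (Hsub _ (proj1 (Hu (f j))))) Cdd). }
  assert (Cdist : Un_cv (fun j => dist2 d b (u (f j))) 0).
  { unfold dist2. replace 0 with (sum_f_R0 (fun i => (b i - b i) * (b i - b i)) d).
    - apply (cv_sum (fun j i => (b i - u (f j) i) * (b i - u (f j) i)) (fun i => (b i - b i) * (b i - b i))).
      intros i Hi. assert (Hc : Un_cv (fun j => b i - u (f j) i) (b i - b i)).
      { apply CV_minus; [|apply Hb; auto]. intros eps He; exists 0%nat; intros.
        unfold R_dist; rewrite Rminus_diag, Rabs_R0; auto. }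
      apply CV_mult; auto.
    - apply sum_zero. }
  assert (Db : D b).
  { apply Hcl. split; auto. intros eps He.
    destruct (Cdist (eps*eps) ltac:(nra)) as [N HN]. exists (u (f N)). split; [apply Hu|].
    specialize (HN N (le_n _)). unfold R_dist in HN. rewrite Rminus_0_r in HN.
    apply Rabs_def2 in HN. lra. }
  exists b. split; auto.
  intros x Dx. apply Rle_trans with k; auto.
  destruct (Rle_or_lt (dot d b a) k) as [h|h]; auto. exfalso.
  set (eta := dot d b a - k).
  destruct (archimed_cor1 (eta/2) ltac:(unfold eta; lra)) as [M [HM1 HM2]].
  destruct (Cdot a (eta/2) ltac:(unfold eta; lra)) as [N HN].
  set (j := max M N).
  specialize (HN j ltac:(unfold j; lia)). unfold R_dist in HN. apply Rabs_def2 in HN.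
  destruct (Hu (f j)) as [_ Hj].
  assert (/ INR (S (f j)) <= / INR M).
  { apply Rinv_le_contravar; [apply lt_0_INR; lia| apply le_INR].
    pose proof (incr_ge f Hf j). unfold j in *. lia. }
  unfold eta in *. lra.
Qed.

Definition E (j : nat) : vec := fun i => if Nat.eqb i j then 1 else 0.

Lemma sum_E0 (x : vec) j n : (n < j)%nat ->
  sum_f_R0 (fun i => x i * (if Nat.eqb i j then 1 else 0)) n = 0.
Proof.
  induction n; intros Hn; cbn [sum_f_R0].
  - destruct (Nat.eqb_spec 0 j); [lia|ring].
  - rewrite IHn by lia. destruct (Nat.eqb_spec (S n) j); [lia|ring].
Qed.

Lemma dot_E d x j : (j <= d)%nat -> dot d x (E j) = x j.
Proof.
  unfold dot, E. induction d as [|d IH]; intros Hj; cbn [sum_f_R0].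
  - destruct (Nat.eqb_spec 0 j); [subst; ring|lia].
  - destruct (Nat.eq_dec j (S d)) as [e|e].
    + subst. rewrite sum_E0 by lia. rewrite Nat.eqb_refl. ring.
    + rewrite IH by lia. destruct (Nat.eqb_spec (S d) j); [lia|ring].
Qed.

Lemma zb_E d j : (j <= d)%nat -> zb d (E j).
Proof. intros Hj i Hi. unfold E. replace (Nat.eqb i j) with false by (symmetry; apply Nat.eqb_neq; lia). auto. Qed.

Lemma exists_perp d a : (1 <= d)%nat -> on_sphere d a -> exists e, on_sphere d e /\ dot d a e = 0.
Proof.
  intros Hd [Za Na].
  assert (E00 : dot d (E 0) (E 0) = 1) by (rewrite dot_E by lia; reflexivity).
  assert (E11 : dot d (E 1) (E 1) = 1) by (rewrite dot_E by lia; reflexivity).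
  assert (E01 : dot d (E 0) (E 1) = 0) by (rewrite dot_E by lia; reflexivity).
  destruct (Req_dec (a 0%nat * a 0%nat + a 1%nat * a 1%nat) 0) as [z|z].
  - exists (E 0). split; [split; [apply zb_E; lia| auto]|]. rewrite dot_E by lia. nra.
  - set (rho := sqrt (a 0%nat * a 0%nat + a 1%nat * a 1%nat)).
    assert (Hr : 0 < rho) by (apply sqrt_lt_R0; nra).
    assert (Hrr : rho * rho = a 0%nat * a 0%nat + a 1%nat * a 1%nat) by (apply sqrt_sqrt; nra).
    exists (fun i => (- a 1%nat / rho) * E 0 i + (a 0%nat / rho) * E 1 i + 0 * E 0 i). split.
    + apply mk_sph; [apply zb3; apply zb_E; lia|].
      dexp d (fun i => (- a 1%nat / rho) * E 0 i + (a 0%nat / rho) * E 1 i + 0 * E 0 i) (fun i => (- a 1%nat / rho) * E 0 i + (a 0%nat / rho) * E 1 i + 0 * E 0 i) (E 0) (E 1) (E 0) (- a 1%nat / rho) (a 0%nat / rho) 0 (- a 1%nat / rho) (a 0%nat / rho) 0.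
      rewrite E00, E11, E01. transitivity ((a 0%nat * a 0%nat + a 1%nat * a 1%nat) / (rho * rho)); [field; lra|].
      rewrite Hrr. field. nra.
    + dexp d a (fun i => (- a 1%nat / rho) * E 0 i + (a 0%nat / rho) * E 1 i + 0 * E 0 i) a (E 0) (E 1) 1 0 0 0 (- a 1%nat / rho) (a 0%nat / rho).
      rewrite !dot_E by lia. field. lra.
Qed.

Lemma support_from_min d D a b : convex_body d D -> on_sphere d a -> D b ->
  (forall x, D x -> dot d b a <= dot d x a) -> -1 < dot d b a < 1 ->
  exists w s, 0 < s /\ s * s + dot d b a * dot d b a = 1 /\ supports_at d w D b /\
    forall i, a i = dot d b a * b i + s * w i.
Proof.
  intros Hb Sa Db Hmin Hk.
  pose proof Hb as [Hcv _].
  assert (Sb : on_sphere d b) by (apply body_sph with D; auto).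
  pose proof Sa as [Za Na]; pose proof Sb as [Zb Nb].
  set (k := dot d b a) in *.
  assert (HA : 0 < 1 - k * k) by nra.
  assert (Hs : 0 < sqrt (1 - k*k)) by (apply sqrt_lt_R0; lra).
  assert (Hss : sqrt (1 - k*k) * sqrt (1 - k*k) = 1 - k * k) by (apply sqrt_sqrt; lra).
  set (s := sqrt (1 - k*k)) in *.
  set (w := fun i => / s * a i + (- k / s) * b i + 0 * b i).
  exists w, s. split; auto. split; [lra|]. split.
  - split; [apply mk_sph; [apply zb3; auto| apply unit_comb; auto; [rewrite dot_comm; reflexivity| lra]]|].
    split; [|split; [split; auto|auto]].
    + intros x Dx. split; [apply body_sph with D; auto|].
      pose proof (first_order d D a b x Hcv Sa Db Dx Hmin) as F. fold k in F.
      unfold w. dexp d (fun i => / s * a i + (- k / s) * b i + 0 * b i) x a b x (/s) (-k/s) 0 0 0 1.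
      rewrite (dot_comm d a x), (dot_comm d b x).
      assert (E : / s * 0 * dot d a a + - k / s * 0 * dot d b b + 0 * 1 * dot d x x +
        (/ s * 0 + - k / s * 0) * dot d a b + (/ s * 1 + 0 * 0) * dot d x a +
        (- k / s * 1 + 0 * 0) * dot d x b = (dot d x a - k * dot d x b) / s) by (field; lra).
      rewrite E. unfold Rdiv; apply Rmult_le_pos; [lra| left; apply Rinv_0_lt_compat; lra].
    + unfold w. dexp d (fun i => / s * a i + (- k / s) * b i + 0 * b i) b a b b (/s) (-k/s) 0 0 1 0.
      rewrite Nb, (dot_comm d a b). fold k. field. lra.
  - intros i. unfold w. field. lra.
Qed.

Lemma support_bd d D w b : supports_at d w D b -> boundary_pt d D b.
Proof.
  intros [Sw [HD [[_ Hwb] Db]]]. apply boundary_of_support with w; auto.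
Qed.

Lemma min_range d D a b : convex_body d D -> on_sphere d a -> D a -> D b -> -1 < dot d b a.
Proof.
  intros Hb Sa Da Db. pose proof Hb as [[_ [Hna _]] _].
  assert (Sb : on_sphere d b) by (apply body_sph with D; auto).
  pose proof (sph_bound d b a Sb Sa).
  destruct (Req_dec (dot d b a) (-1)) as [e|e]; [|lra]. exfalso.
  assert (b = vopp a).
  { apply unit_eq with d; auto. apply vopp_sph; auto. unfold vopp.
    dexp d b (fun i => - a i) b a a 1 0 0 0 (-1) 0. lra. }
  exact (Hna a b Da Db H0).
Qed.

Lemma exists_bd d D : (1 <= d)%nat -> convex_body d D -> exists p, boundary_pt d D p.
Proof.
  intros Hd Hb. pose proof Hb as [[Hsub [Hna Harc]] [Hcl [x0 [Dx0 [eps [He Hint]]]]]].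
  assert (Sx0 : on_sphere d x0) by auto.
  destruct (exists_perp d x0 Hd Sx0) as [e [Se Hxe]].
  destruct (tilt d x0 e eps Sx0 Se Hxe He) as [y [Sy [Dy Ey]]].
  assert (DY : D y) by (apply Hint; auto).
  destruct (argmin d D x0 Hcl Hsub (ex_intro _ _ Dx0) Sx0) as [b [Db Hmin]].
  assert (Hk1 : dot d b x0 < 1).
  { apply Rle_lt_trans with (dot d y x0); [apply Hmin; auto|].
    pose proof (sph_bound d y x0 Sy Sx0).
    destruct (Req_dec (dot d y x0) 1) as [q|q]; [|lra]. exfalso.
    assert (y = x0) by (apply unit_eq with d; auto). subst y.
    rewrite dot_comm in Hxe. lra. }
  pose proof (min_range d D x0 b Hb Sx0 Dx0 Db).
  destruct (support_from_min d D x0 b Hb Sx0 Db Hmin ltac:(lra)) as [w [s [_ [_ [Hw _]]]]].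
  exists b. apply support_bd with w; auto.
Qed.

Lemma cw_cd d delta D : (1 <= d)%nat -> 0 < delta < PI / 2 -> convex_body d D -> smooth d D ->
  constant_width d D delta -> constant_diameter d D delta.
Proof.
  intros Hd Hdl Hb Hsm Hcw.
  pose proof (get_trig delta Hdl) as T. set (c := cos delta) in *. set (s := sin delta) in *.
  destruct T as [c0 c1 s0 cs ac _].
  pose proof Hb as [[Hsub [Hna Harc]] [Hcl _]].
  assert (Ha : forall a x, D a -> D x -> c <= dot d x a).
  { intros a x Da Dx. assert (Sa : on_sphere d a) by auto.
    destruct (argmin d D a Hcl Hsub (ex_intro _ _ Da) Sa) as [b [Db Hmin]].
    apply Rle_trans with (dot d b a); [|apply Hmin; auto].
    pose proof (min_range d D a b Hb Sa Da Db) as Hk0.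
    assert (Sb : on_sphere d b) by auto.
    destruct (Rlt_or_le (dot d b a) 1) as [k1|k1]; [|lra].
    destruct (support_from_min d D a b Hb Sa Db Hmin ltac:(lra)) as [w [sk [Hsk [Hskk [Hsup Hai]]]]].
    set (k := dot d b a) in *.
    pose proof Hsup as [Sw [HDw [[_ Hwb] _]]].
    destruct (Hcw w (ex_intro _ b Hsup)) as [_ W2].
    assert (HL : acos (Rmax k 0) <= delta).
    { apply W2. intros t [m [Sm [Hmw [Hmw' [Hin Ht]]]]].
      rewrite (thick_val d w m t Sw Sm Hmw Hmw' Ht).
      assert (Hal : 0 <= dot d m b) by (destruct (Hin b Db) as [_ [_ h]]; auto).
      assert (Hma : 0 <= dot d m a) by (destruct (Hin a Da) as [_ [_ h]]; auto).
      assert (Hma' : dot d m a = k * dot d m b + sk * dot d m w).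
      { rewrite (dot_V3 d m a m b w 1 0 0 0 k sk).
        - ring.
        - intros; ring.
        - intros i; rewrite (Hai i); ring. }
      rewrite (dot_comm d w m).
      assert (Hbw : dot d b w = 0) by (rewrite dot_comm; auto).
      pose proof (bessel d m b w Sm Sb Sw Hbw) as Bs.
      pose proof (sph_bound d m w Sm Sw).
      unfold Rmax; destruct (Rle_dec k 0) as [kk|kk].
      - assert (0 <= dot d m w).
        { assert (0 <= (-k) * dot d m b) by (apply Rmult_le_pos; lra).
          assert (0 <= sk * dot d m w) by lra.
          destruct (Rle_or_lt 0 (dot d m w)) as [h|h]; auto.
          assert (sk * dot d m w < 0) by (apply Rmult_pos_neg; auto). lra. }
        apply acos_le; lra.
      - assert (-k <= dot d m w).
        { apply (beta_bound d m b w k sk Sm Sb Sw Hbw Hsk ltac:(lra) ltac:(lra) Hal). lra. }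
        apply acos_le; lra. }
    unfold Rmax in HL; destruct (Rle_dec k 0) as [kk|kk].
    - rewrite acos_0 in HL. lra.
    - rewrite <- ac in HL. apply acos_ge_inv in HL; lra. }
  assert (Hbp : forall p, boundary_pt d D p -> exists p', boundary_pt d D p' /\ dot d p p' = c).
  { intros p Bp. assert (Dp : D p) by (apply bd_in with d; auto).
    assert (Sp : on_sphere d p) by auto.
    destruct (Hsm p Bp) as [_ [n [Hsup _]]].
    pose proof Hsup as [Sn [HDn [[_ Hnp] _]]].
    pose proof Sp as [Zp Np]; pose proof Sn as [Zn Nn].
    assert (Hpn : dot d p n = 0) by (rewrite dot_comm; auto).
    destruct (argmin d D p Hcl Hsub (ex_intro _ _ Dp) Sp) as [b [Db Hmin]].
    pose proof (Ha p b Dp Db) as Hkc.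
    assert (Hkc' : dot d b p <= c).
    { destruct (Rle_or_lt (dot d b p) c) as [h|h]; auto. exfalso.
      set (k := dot d b p) in *.
      set (k0 := Rmin k ((c+1)/2)).
      assert (Hk0 : c < k0 /\ k0 < 1 /\ k0 <= k) by (unfold k0, Rmin; destruct Rle_dec; lra).
      assert (HA : 0 < 1 - k0 * k0) by nra.
      assert (Hs0 : 0 < sqrt (1 - k0*k0)) by (apply sqrt_lt_R0; lra).
      assert (Hss0 : sqrt (1 - k0*k0) * sqrt (1 - k0*k0) = 1 - k0 * k0) by (apply sqrt_sqrt; lra).
      set (s1 := sqrt (1 - k0*k0)) in *.
      set (m := fun i => s1 * p i + (-k0) * n i + 0 * p i).
      set (q := fun i => k0 * p i + s1 * n i + 0 * p i).
      assert (Sm : on_sphere d m).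
      { apply mk_sph; [apply zb3; auto|]. unfold m.
        dexp d (fun i => s1 * p i + (-k0) * n i + 0 * p i) (fun i => s1 * p i + (-k0) * n i + 0 * p i) p n p s1 (-k0) 0 s1 (-k0) 0.
        rewrite Np, Nn, Hpn. nra. }
      assert (Sq : on_sphere d q).
      { apply mk_sph; [apply zb3; auto|]. unfold q.
        dexp d (fun i => k0 * p i + s1 * n i + 0 * p i) (fun i => k0 * p i + s1 * n i + 0 * p i) p n p k0 s1 0 k0 s1 0.
        rewrite Np, Nn, Hpn. nra. }
      assert (Hqp : dot d q p = k0).
      { unfold q. dexp d (fun i => k0 * p i + s1 * n i + 0 * p i) p p n p k0 s1 0 1 0 0.
        rewrite Np, Nn, Hpn. ring. }
      assert (Hnm : dot d n m = - k0).
      { unfold m. dexp d n (fun i => s1 * p i + (-k0) * n i + 0 * p i) p n p 0 1 0 s1 (-k0) 0.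
        rewrite Np, Nn, Hpn. ring. }
      assert (Hin : forall x, D x -> hemi d n x /\ hemi d m x).
      { intros x Dx. assert (Sx : on_sphere d x) by auto.
        split; [apply HDn; auto| split; auto].
        assert (k0 <= dot d x p) by (pose proof (Hmin x Dx); lra).
        pose proof (cap_lemma d x p q k0 Sx Sp Sq Hqp ltac:(lra) H) as Hc.
        assert (Exq : dot d x q = k0 * dot d x p + s1 * dot d x n).
        { unfold q. dexp d x (fun i => k0 * p i + s1 * n i + 0 * p i) x p n 1 0 0 0 k0 s1. ring. }
        assert (Emx : dot d m x = s1 * dot d x p - k0 * dot d x n).
        { unfold m. dexp d (fun i => s1 * p i + (-k0) * n i + 0 * p i) x p n x s1 (-k0) 0 0 0 1.
          rewrite (dot_comm d p x), (dot_comm d n x). ring. }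
        rewrite Emx. rewrite Exq in Hc.
        assert (0 <= s1 * (s1 * dot d x p - k0 * dot d x n)) by nra.
        destruct (Rle_or_lt 0 (s1 * dot d x p - k0 * dot d x n)) as [hh|hh]; auto.
        assert (s1 * (s1 * dot d x p - k0 * dot d x n) < 0) by (apply Rmult_pos_neg; auto). lra. }
      destruct (Hcw n (ex_intro _ p Hsup)) as [W1 _].
      assert (Hd1 : delta <= acos k0).
      { apply W1. exists m. split; auto. split; [|split; [|split; auto]].
        - intro e. assert (dot d n m = 1) by (rewrite e; auto). lra.
        - intro e. assert (dot d n m = -1).
          { rewrite e. unfold vopp. dexp d n (fun i => - n i) n n n 1 0 0 (-1) 0 0. lra. }
          lra.
        - pose proof (thick_ex d n m Sn Sm ltac:(lra)) as TE.
          rewrite Hnm, Ropp_involutive in TE. exact TE. }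
      rewrite <- ac in Hd1. apply acos_ge_inv in Hd1; lra. }
    assert (Hk : dot d b p = c) by lra.
    destruct (support_from_min d D p b Hb Sp Db Hmin ltac:(lra)) as [w [_ [_ [_ [Hsupb _]]]]].
    exists b. split; [apply support_bd with w; auto| rewrite dot_comm; auto]. }
  split; [auto|split].
  - split.
    + intros t [x [y [Dx [Dy ->]]]]. unfold sdist. rewrite <- ac.
      pose proof (Ha y x Dy Dx). pose proof (sph_bound d x y (Hsub x Dx) (Hsub y Dy)).
      apply acos_le; lra.
    + intros ub Hub. destruct (exists_bd d D Hd Hb) as [p Bp].
      destruct (Hbp p Bp) as [p' [Bp' Hpp']]. apply Hub.
      exists p, p'. split; [apply bd_in with d; auto|]. split; [apply bd_in with d; auto|].
      unfold sdist. rewrite Hpp', ac. auto.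
  - intros p Bp. destruct (Hbp p Bp) as [p' [Bp' Hpp']]. exists p'. split; auto.
    unfold sdist. rewrite Hpp'. auto.
Qed.

Theorem theorem1 (d : nat) (delta : R) (D : set) :
  (2 <= d)%nat -> 0 < delta < PI / 2 ->
  convex_body d D -> smooth d D ->
  (constant_diameter d D delta <-> constant_width d D delta).
Proof.
  intros Hd Hdl Hb Hsm. split.
  - apply cd_cw; auto.
  - apply cw_cd; auto. lia.
Qed.
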